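(* Let $\mathcal{F}$ be a finite set of graphs. For every integer $T>0$ and real $\lambda>0$: (i) with $r=\sqrt{(T+1)n}$ and $n\ge r^2/\lambda^2$, $\mathsf{VC}\text{-}\mathsf{dim}\big(\mathbb{H}_{r,\lambda}(\mathcal{E}_{\mathsf{WLOA},\mathcal{F}}(n,d_T))\big)\in\Theta(r^2/\lambda^2)$; (ii) with $r=\sqrt{T/(T+1)}$ and $n\ge r^2/\lambda^2$, $\mathsf{VC}\text{-}\mathsf{dim}\big(\mathbb{H}_{1,\lambda}(\overline{\mathcal{E}}_{\mathsf{WLOA},\mathcal{F}}(n,d_T))\big)\in\Theta(1/\lambda^2)$.
   Context: $\mathcal{G}_n$ is the set of (unlabeled, simple, undirected) graphs on $n$ vertices. $1$-WL$_{\mathcal{F}}$ colouring: $C^{1,\mathcal{F}}_0(v)=(\ell_F(v))_{F\in\mathcal{F}}$ with $\ell_F(v)=1$ if $v$ lies in some $X\subseteq V(G)$ with $G[X]$ isomorphic to $F$, else $0$; $C^{1,\mathcal{F}}_t(v)=\mathsf{RELABEL}(C^{1,\mathcal{F}}_{t-1}(v),\{\!\{C^{1,\mathcal{F}}_{t-1}(u):u\in N(v)\}\!\})$ with a fixed injective $\mathsf{RELABEL}$ shared by all graphs; $\Sigma_t$ is the set of round-$t$ colours over $\mathcal{G}_n$, and $\phi_{\mathcal{F},t}(G)_c$ the number of vertices of $G$ with colour $c$ at round $t$. $\phi^{(T)}_{\mathsf{WLOA},\mathcal{F}}(G)\in\{0,1\}^{d_T}$ has a coordinate for each $(t,c,j)$,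 $t\in\{0,\dots,T\}$, $c\in\Sigma_t$, $j\in\{1,\dots,n\}$, equal to $1$ iff $\phi_{\mathcal{F},t}(G)_c\ge j$; $\overline{\phi^{(T)}_{\mathsf{WLOA},\mathcal{F}}}$ is its unit-norm normalisation; $\mathcal{E}_{\mathsf{WLOA},\mathcal{F}}(n,d_T)=\{\phi^{(T)}_{\mathsf{WLOA},\mathcal{F}}\}$, $\overline{\mathcal{E}}_{\mathsf{WLOA},\mathcal{F}}(n,d_T)=\{\overline{\phi^{(T)}_{\mathsf{WLOA},\mathcal{F}}}\}$. A sample is $(r,\lambda)$-separable if its points lie in a ball of radius $r$ and the distance between the convex hulls of the two classes is at least $2\lambda$. $\mathbb{H}_{r,\lambda}(\mathcal{E})$: partial concepts $h:\mathcal{G}_n\to\{0,1,\star\}$ such that every finite list of graphs with $h\ne\star$, labelled by $h$ and embedded by some $\mathrm{emb}\in\mathcal{E}$, is $(r,\lambda)$-separable. VC dimension: largest size of a shattered set. *)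

(* Defs.v *)
From HB Require Import structures.
From mathcomp Require Import all_boot all_order all_algebra.
From mathcomp Require Import boolp reals.
Set Implicit Arguments. Unset Strict Implicit. Unset Printing Implicit Defensive.
Import Order.TTheory GRing.Theory Num.Theory.
Local Open Scope ring_scope.

Definition is_graph n (g : {ffun 'I_n -> {ffun 'I_n -> bool}}) : bool :=
  [forall u, forall v, g u v == g v u] && [forall u, ~~ g u u].
Notation graph n := {g : {ffun 'I_n -> {ffun 'I_n -> bool}} | is_graph g}.
Definition adj n (G : graph n) (u v : 'I_n) : bool := val G u v.

Definition pattern := {k : nat & graph k}.

Definition ell n (F : pattern) (G : graph n) (v : 'I_n) : bool :=
  let: existT k H := F in
  [exists X : {set 'I_n}, exists f : {ffun 'I_k -> 'I_n},
     [&& v \in X, injectiveb f, f @: setT == X &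
         [forall a, forall b, adj H a b == adj G (f a) (f b)]]].

(* Fixed injective RELABEL : nat * (multiset of nat) -> nat, shared by all
   graphs: the multiset is represented canonically by its sorted list and
   the pair is encoded by the bijection CodeSeq.code : seq nat -> nat. *)
Definition relabel (c : nat) (M : seq nat) : nat :=
  CodeSeq.code (c :: sort leq M).

Fixpoint wlcol (Fs : seq pattern) (t : nat) n (G : graph n) (v : 'I_n) : nat :=
  match t with
  | 0 => CodeSeq.code [seq nat_of_bool (ell F G v) | F <- Fs]
  | t'.+1 => relabel (wlcol Fs t' G v)
                     [seq wlcol Fs t' G u | u <- enum 'I_n & adj G v u]
  end.

Definition Sigma (Fs : seq pattern) n (t : nat) : seq nat :=
  undup [seq wlcol Fs t G v | G <- enum {: graph n}, v <- enum 'I_n].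

Definition wlcount (Fs : seq pattern) n (t : nat) (G : graph n) (c : nat) : nat :=
  #|[set v : 'I_n | wlcol Fs t G v == c]|.

Definition coords (Fs : seq pattern) n (T : nat) : seq (nat * nat * nat) :=
  flatten [seq [seq (t, c, j) | c <- Sigma Fs n t, j <- iota 1 n]
          | t <- iota 0 T.+1].

Definition dT (Fs : seq pattern) n (T : nat) : nat := size (coords Fs n T).

Section Vec.
Variable R : realType.

Definition sqnorm (I : finType) (x : I -> R) : R := \sum_i x i ^+ 2.
Definition vnorm (I : finType) (x : I -> R) : R := Num.sqrt (sqnorm x).
Definition vdist (I : finType) (x y : I -> R) : R := vnorm (fun i => x i - y i).

Definition phiWLOA (Fs : seq pattern) n (T : nat) (G : graph n)
  : 'I_(dT Fs n T) -> R :=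
  fun i => let: (t, c, j) := nth (0, 0, 0)%N (coords Fs n T) i in
           if (j <= wlcount Fs t G c)%N then 1 else 0.

Definition nphiWLOA (Fs : seq pattern) n (T : nat) (G : graph n)
  : 'I_(dT Fs n T) -> R :=
  fun i => @phiWLOA Fs n T G i / vnorm (@phiWLOA Fs n T G).

Definition inHull (I : finType) (S : seq (I -> R)) (p : I -> R) : Prop :=
  exists w : 'I_(size S) -> R,
    [/\ forall k, 0 <= w k, \sum_k w k = 1 &
        forall i, p i = \sum_k w k * nth (fun _ => 0) S k i].

(* (r, lambda)-separable labelled sample (points in the closed ball of
   radius r around the origin; convex hulls of the two classes at
   distance >= 2 lambda, i.e. inf of pairwise distances >= 2 lambda). *)
Definition separable (I : finType) (r lam : R) (s : seq ((I -> R) * bool)) : Prop :=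
  (forall x, x \in [seq y.1 | y <- s] -> vnorm x <= r) /\
  forall p q, inHull [seq y.1 | y <- s & ~~ y.2] p ->
              inHull [seq y.1 | y <- s & y.2] q ->
              2 * lam <= vdist p q.

(* H_{r,lambda}({emb}) : partial concepts (None = star, Some b = label b) *)
Definition Hclass n (I : finType) (r lam : R) (emb : graph n -> I -> R)
  (h : graph n -> option bool) : Prop :=
  forall s : seq (graph n), (forall g, g \in s -> h g <> None) ->
    separable r lam [seq (emb g, odflt false (h g)) | g <- s].

Definition shattered n (H : (graph n -> option bool) -> Prop) (S : {set graph n}) : Prop :=
  forall b : graph n -> bool, exists h, H h /\ forall g, g \in S -> h g = Some (b g).

Definition VCdim n (H : (graph n -> option bool) -> Prop) : nat :=
  \max_(S : {set graph n} | `[< shattered H S >]) #|S|.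

End Vec.
Arguments phiWLOA {R} Fs {n} T G _.
Arguments nphiWLOA {R} Fs {n} T G _.

(* Main.v *)
Require Import Defs.
From HB Require Import structures.
From mathcomp Require Import all_boot all_order all_algebra.
From mathcomp Require Import boolp reals.
From mathcomp Require Import zify ring lra.
Import Order.TTheory GRing.Theory Num.Theory.

Open Scope ring_scope.
Lemma sqnorm_ge0 {R : realType} {I : finType} (x : I -> R) : 0 <= sqnorm x.
Proof. by apply: sumr_ge0 => i _; apply: sqr_ge0. Qed.

Lemma sqnormD {R : realType} {I : finType} (x y : I -> R) :
  sqnorm (fun i => x i + y i) = sqnorm x + 2 * (\sum_i x i * y i) + sqnorm y.
Proof.
rewrite /sqnorm mulr_sumr -!big_split /=; apply: eq_bigr => i _; ring.
Qed.

Definition dd {R : realType} {I : finType} {X : Type} (emb : X -> I -> R) (p : X * X) :=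
  fun i => emb p.1 i - emb p.2 i.

Definition swapr {X : eqType} (q p : X * X) := (q == p) || (q == (p.2, p.1)).

Lemma sqnorm_swap {R : realType} {I : finType} {X : eqType} (emb : X -> I -> R) q p :
  swapr q p -> sqnorm (dd emb q) = sqnorm (dd emb p).
Proof.
case/orP=> /eqP ->; rewrite // /sqnorm; apply: eq_bigr => i _; rewrite /dd /=; ring.
Qed.

Lemma greedy {R : realType} {I : finType} {X : eqType} (emb : X -> I -> R) ps :
  exists qs, all2 swapr qs ps /\
   sqnorm (fun i => \sum_(q <- qs) dd emb q i) <= \sum_(p <- ps) sqnorm (dd emb p).
Proof.
elim: ps => [|p ps [qs [Hall Hle]]].
  exists [::]; split => //; rewrite big_nil /sqnorm.
  by rewrite big1 // => i _; rewrite big_nil expr2 mulr0.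
set v := (fun i => \sum_(q <- qs) dd emb q i).
have [hneg|hpos] := lerP (\sum_i dd emb p i * v i) 0.
  exists (p :: qs); split; first by rewrite /= /swapr eqxx Hall.
  rewrite (_ : (fun i => _) = fun i => dd emb p i + v i); last first.
    by apply: funext => i; rewrite big_cons.
  rewrite sqnormD big_cons; lra.
exists ((p.2, p.1) :: qs); split; first by rewrite /= /swapr eqxx orbT Hall.
rewrite (_ : (fun i => _) = fun i => dd emb (p.2,p.1) i + v i); last first.
  by apply: funext => i; rewrite big_cons.
rewrite sqnormD big_cons.
have -> : sqnorm (dd emb (p.2, p.1)) = sqnorm (dd emb p).
  by apply: sqnorm_swap; rewrite /swapr eqxx orbT.
have -> : \sum_i dd emb (p.2, p.1) i * v i = - \sum_i dd emb p i * v i.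
  rewrite -sumrN; apply: eq_bigr => i _; rewrite /dd /=; ring.
lra.
Qed.

Lemma mean_inHull {R : realType} {I : finType} (L : seq (I -> R)) :
  (0 < size L)%N ->
  inHull L (fun i => (size L)%:R^-1 * \sum_(x <- L) x i).
Proof.
move=> hL; exists (fun _ => (size L)%:R^-1); split.
- by move=> k; rewrite invr_ge0 ler0n.
- rewrite sumr_const card_ord; idtac.
  by rewrite -[_ *+ _]mulr_natr mulVf // pnatr_eq0 -lt0n.
- move=> i; rewrite -mulr_sumr; congr (_ * _).
  rewrite (big_nth (fun _ => 0)) big_mkord; apply: eq_bigr => k _.
  by [].
Qed.

Fixpoint pairs_of {X : Type} (l : seq X) : seq (X * X) :=
  match l with a :: b :: l' => (a, b) :: pairs_of l' | _ => [::] end.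
Definition flat {X : Type} (ps : seq (X * X)) := flatten [seq [:: p.1; p.2] | p <- ps].

Lemma pairs_ofP {X : Type} (l : seq X) :
  exists l', l = flat (pairs_of l) ++ l' /\ (size l' <= 1)%N.
Proof.
move: {2}(size l) (leqnn (size l)) => k; elim: k l => [|k IH] [|a [|b l]] //= hs;
  try by exists [::].
all: try by exists [:: a].
have [l' [E hl']] := IH l (ltnW hs); exists l'; split => //.
by rewrite {1}E.
Qed.

Lemma size_flat {X : Type} (ps : seq (X * X)) : size (flat ps) = (2 * size ps)%N.
Proof. elim: ps => //= p ps IH; rewrite /flat /= -/(flat _) IH; lia. Qed.

Lemma perm_swap {X : eqType} (qs ps : seq (X * X)) :
  all2 swapr qs ps -> perm_eq (unzip1 qs ++ unzip2 qs) (flat ps).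
Proof.
elim: qs ps => [|q qs IH] [|p ps] //= /andP [hq /IH hp].
apply/permP => P; move/permP: hp => /(_ P).
have -> : flat (p :: ps) = p.1 :: p.2 :: flat ps by [].
rewrite /= !count_cat /= => <-.
case/orP: hq => /eqP -> /=; lia.
Qed.

Lemma size_all2 {S T : Type} (r : S -> T -> bool) s t : all2 r s t -> size s = size t.
Proof. by rewrite all2E => /andP [/eqP]. Qed.
Lemma vnorm_le_sq {R : realType} {I : finType} (x : I -> R) r :
  vnorm x <= r -> sqnorm x <= r ^+ 2.
Proof.
move=> h; have r0 : 0 <= r by apply: le_trans h; apply: sqrtr_ge0.
rewrite -(sqr_sqrtr (sqnorm_ge0 x)); rewrite lerXn2r // ?nnegrE ?sqrtr_ge0 //.
Qed.

Lemma vdist_ge_sq {R : realType} {I : finType} (p q : I -> R) lam :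
  0 <= lam -> 2 * lam <= vdist p q -> 4 * lam ^+ 2 <= sqnorm (fun i => p i - q i).
Proof.
move=> l0 h.
have -> : 4 * lam ^+ 2 = (2 * lam) ^+ 2 by ring.
rewrite -(sqr_sqrtr (sqnorm_ge0 (fun i => p i - q i))).
rewrite lerXn2r // ?nnegrE ?sqrtr_ge0 //; lra.
Qed.

Open Scope ring_scope.

Lemma sqnorm_scale {R : realType} {I : finType} (c : R) (x : I -> R) :
  sqnorm (fun i => c * x i) = c ^+ 2 * sqnorm x.
Proof. rewrite /sqnorm mulr_sumr; apply: eq_bigr => i _; ring. Qed.

Lemma sqnorm_dd {R : realType} {I : finType} (x y : I -> R) :
  sqnorm (fun i => x i - y i) <= 2 * sqnorm x + 2 * sqnorm y.
Proof.
rewrite /sqnorm !mulr_sumr -big_split /=; apply: ler_sum => i _.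
have := sqr_ge0 (x i + y i); lra.
Qed.

Lemma sum_seq_const {R : realType} {T : Type} (s : seq T) (c : R) :
  \sum_(x <- s) c = (size s)%:R * c.
Proof.
elim: s => [|x s IH]; first by rewrite big_nil mul0r.
by rewrite big_cons IH /= -add1n natrD mulrDl mul1r.
Qed.

Lemma mem_flat {X : eqType} (ps : seq (X * X)) p :
  p \in ps -> p.1 \in flat ps /\ p.2 \in flat ps.
Proof.
elim: ps => [|q ps IH] //; rewrite inE => /orP [/eqP ->|/IH [h1 h2]].
  by rewrite /flat /= !inE !eqxx orbT.
by rewrite /flat /= -/(flat ps) !inE h1 h2 !orbT.
Qed.

Lemma shattered_upper {R : realType} n (I : finType) (emb : graph n -> I -> R) r lam :
  0 < lam -> forall S, shattered (Hclass r lam emb) S ->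
  #|S|%:R <= 2 * (r ^+ 2 / lam ^+ 2) + 1.
Proof.
move=> lam0 S hS.
have rl0 : 0 <= r ^+ 2 / lam ^+ 2 by rewrite divr_ge0 // sqr_ge0.
set e := enum S.
have ue : uniq e := enum_uniq _.
have [l' [E hl']] := pairs_ofP e.
set ps := pairs_of e in E.
set k := size ps.
have hsz : (#|S| <= 2 * k + 1)%N.
  by rewrite cardE -/e E size_cat size_flat; lia.
have [k0|kpos] := posnP k.
  have : (#|S| <= 1)%N by rewrite k0 in hsz.
  rewrite -(ler_nat R) => h; apply: le_trans h _; lra.
have [qs [Hall Hle]] := greedy emb ps.
set A := unzip1 qs; set B := unzip2 qs.
have Hperm : perm_eq (A ++ B) (flat ps) := @perm_swap _ qs ps Hall.
have ufl : uniq (flat ps) by move: ue; rewrite {1}E cat_uniq => /and3P [].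
have uAB : uniq (A ++ B) by rewrite (perm_uniq Hperm).
have inS : forall g, g \in A ++ B -> g \in S.
  move=> g; rewrite (perm_mem Hperm) => hg.
  by rewrite -mem_enum -/e E mem_cat hg.
have sA : size A = k by rewrite size_map (size_all2 _ _ _ Hall).
have sB : size B = k by rewrite size_map (size_all2 _ _ _ Hall).
have [h [Hh hb]] := hS (fun g => g \in B).
have := Hh (A ++ B).
have hnone : forall g, g \in A ++ B -> h g <> None by move=> g /inS /hb ->.
move=> /(_ hnone) [Hn Hsep].
have Emap : [seq (emb g, odflt false (h g)) | g <- A ++ B]
          = [seq (emb g, g \in B) | g <- A ++ B].
  by apply/eq_in_map => g /inS /hb ->.
rewrite Emap in Hn Hsep.
have dAB : forall g, g \in A -> g \notin B.
  move=> g gA; move: uAB; rewrite cat_uniq => /and3P [_ /hasPn H _].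
  by apply/negP => gB; move: (H g gB); rewrite gA.
have EF : [seq y.1 | y <- [seq (emb g, g \in B) | g <- A ++ B] & ~~ y.2] = map emb A.
  rewrite filter_map -map_comp filter_cat.
  have -> : [seq x <- B | (preim (fun g => (emb g, g \in B)) (fun y => ~~ y.2)) x] = [::].
    rewrite (eq_in_filter (a2 := pred0)) ?filter_pred0 // => g gB /=.
    by rewrite gB.
  rewrite cats0; congr map; apply/all_filterP/allP => g gA /=; exact: dAB.
have ET : [seq y.1 | y <- [seq (emb g, g \in B) | g <- A ++ B] & y.2] = map emb B.
  rewrite filter_map -map_comp filter_cat.
  have -> : [seq x <- A | (preim (fun g => (emb g, g \in B)) (fun y => y.2)) x] = [::].
    rewrite (eq_in_filter (a2 := pred0)) ?filter_pred0 // => g gA /=.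
    by rewrite (negbTE (dAB g gA)).
  by congr map; apply/all_filterP/allP => g gB /=.
rewrite EF ET in Hsep.
have Hn' : forall g, g \in A ++ B -> sqnorm (emb g) <= r ^+ 2.
  move=> g gAB; apply: vnorm_le_sq; apply: Hn.
  by rewrite -map_comp; apply: map_f.
have kR : (0 < k%:R :> R) by rewrite ltr0n.
have := Hsep _ _ (mean_inHull (map emb A) _) (mean_inHull (map emb B) _).
have sA' : size (map emb A) = k by rewrite size_map.
have sB' : size (map emb B) = k by rewrite size_map.
rewrite sA' sB' => /(_ kpos kpos) /(vdist_ge_sq _ _ _ (ltW lam0)).
set p := (fun i => _ - _).
have -> : p = (fun i => k%:R^-1 * \sum_(q <- qs) dd emb q i).
  apply: funext => i; rewrite /p -mulrBr; congr (_ * _).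
  by rewrite /A /B !big_map -sumrB.
rewrite sqnorm_scale => H1.
have H2 : \sum_(p <- ps) sqnorm (dd emb p) <= k%:R * (4 * r ^+ 2).
  rewrite -/k -sum_seq_const big_seq [X in _ <= X]big_seq; apply: ler_sum => pp pps.
  have [h1 h2] := mem_flat _ _ pps.
  have g1 : pp.1 \in A ++ B by rewrite (perm_mem Hperm).
  have g2 : pp.2 \in A ++ B by rewrite (perm_mem Hperm).
  apply: le_trans (sqnorm_dd _ _) _.
  have := Hn' _ g1; have := Hn' _ g2; lra.
have H3 : 4 * lam ^+ 2 <= k%:R^-1 ^+ 2 * (k%:R * (4 * r ^+ 2)).
  apply: (le_trans H1); apply: ler_wpM2l; first by apply: sqr_ge0.
  exact: le_trans Hle H2.
have H4 : lam ^+ 2 * k%:R <= r ^+ 2.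
  have k0 : k%:R != 0 :> R by rewrite lt0r_neq0.
  have := ler_wpM2r (ltW kR) H3.
  have -> : k%:R^-1 ^+ 2 * (k%:R * (4 * r ^+ 2)) * k%:R = 4 * r ^+ 2 :> R.
    by field.
  lra.
have H5 : k%:R <= r ^+ 2 / lam ^+ 2.
  by rewrite ler_pdivlMr ?exprn_gt0 // mulrC.
have : #|S|%:R <= (2 * k + 1)%:R :> R by rewrite ler_nat.
rewrite natrD natrM => H6; lra.
Qed.

Open Scope ring_scope.

Lemma sum_in_eq1 {R : realType} {X : finType} (S : {set X}) x :
  x \in S -> \sum_(g in S) ((x == g)%:R : R) = 1.
Proof.
move=> xS; rewrite (bigD1 x) //= eqxx big1 ?addr0 // => g /andP [_ ne].
by rewrite eq_sym (negbTE ne).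
Qed.

Lemma hull_coef {R : realType} {X I : finType} (emb : X -> I -> R) (S : {set X})
  (J : X -> {set I}) (a : X -> R) (A : seq X) p :
  (forall g g' i, g \in S -> g' \in S -> i \in J g -> emb g' i = (g' == g)%:R * a g) ->
  {subset A <= S} -> inHull (map emb A) p ->
  exists al : X -> R, [/\ forall g, 0 <= al g, forall g, g \notin A -> al g = 0,
     \sum_(g in S) al g = 1 & forall g i, g \in S -> i \in J g -> p i = al g * a g].
Proof.
move=> Hemb AS [w [w0 w1 wp]].
case: A AS w w0 w1 wp => [|g0 A'] AS w w0 w1 wp.
  by move: w1; rewrite big_ord0 => /eqP; rewrite eq_sym oner_eq0.
set A := g0 :: A' in AS w w0 w1 wp *.
have sA : size (map emb A) = size A by rewrite size_map.
pose al g := \sum_(k < size (map emb A)) w k * (nth g0 A k == g)%:R.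
have nthS : forall k : 'I_(size (map emb A)), nth g0 A k \in S.
  move=> k; apply: AS; apply: mem_nth; rewrite -sA; exact: ltn_ord.
exists al; split.
- move=> g; apply: sumr_ge0 => k _; apply: mulr_ge0 => //; exact: ler0n.
- move=> g gA; apply: big1 => k _.
  have : nth g0 A k \in A by apply: mem_nth; rewrite -sA; exact: ltn_ord.
  case: eqP => [->|]; first by rewrite (negbTE gA).
  by rewrite mulr0.
- rewrite /al exchange_big /=; rewrite -[RHS]w1; apply: eq_bigr => k _.
  by rewrite -mulr_sumr sum_in_eq1 ?mulr1.
- move=> g i gS iJ; rewrite wp /al mulr_suml; apply: eq_bigr => k _.
  rewrite (nth_map g0) -?sA ?ltn_ord // (Hemb g) //; first by rewrite mulrA.
Qed.

Lemma avg_sq {R : realType} {X : finType} (S : {set X}) (al be : X -> R) :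
  (0 < #|S|)%N ->
  \sum_(g in S) al g = 1 -> \sum_(g in S) be g = 1 ->
  (forall g, al g * be g = 0) ->
  4 / #|S|%:R <= \sum_(g in S) (al g - be g) ^+ 2.
Proof.
move=> m0 sa sb ab.
set m := #|S|%:R : R.
have mpos : 0 < m by rewrite ltr0n.
have H : 0 <= \sum_(g in S) (al g + be g - 2 / m) ^+ 2.
  by apply: sumr_ge0 => g _; apply: sqr_ge0.
have E : \sum_(g in S) (al g + be g - 2 / m) ^+ 2 =
   \sum_(g in S) (al g - be g) ^+ 2 - 4 / m * (\sum_(g in S) al g + \sum_(g in S) be g)
   + m * (2 / m) ^+ 2.
  have E1 : \sum_(g in S) (al g + be g - 2 / m) ^+ 2 =
     \sum_(g in S) ((al g - be g) ^+ 2 + (- (4 / m * (al g + be g)) + (2 / m) ^+ 2)).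
    apply: eq_bigr => g _; have abg := ab g.
    have -> : (al g + be g - 2 / m) ^+ 2 = (al g - be g) ^+ 2 + 4 * (al g * be g)
     - 4 / m * (al g + be g) + (2 / m) ^+ 2 by ring.
    by rewrite abg mulr0 addr0 addrA.
  rewrite E1 big_split /= big_split /= sumrN -mulr_sumr big_split /= sumr_const.
  rewrite /m mulr_natl; ring.
rewrite E sa sb in H.
have E2 : m * (2 / m) ^+ 2 = 4 / m.
  by field; rewrite gt_eqF.
have E3 : 4 / m * (1 + 1) = 2 * (4 / m) by ring.
rewrite E2 E3 in H; lra.
Qed.

Lemma hull_lower {R : realType} {X I : finType} (emb : X -> I -> R) (S : {set X})
  (J : X -> {set I}) (a : X -> R) (N : R) (A B : seq X) p q :
  0 <= N ->
  (forall g g' i, g \in S -> g' \in S -> i \in J g -> emb g' i = (g' == g)%:R * a g) ->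
  (forall g, g \in S -> N <= #|J g|%:R * a g ^+ 2) ->
  (forall g g', g \in S -> g' \in S -> g != g' -> [disjoint J g & J g']) ->
  {subset A <= S} -> {subset B <= S} -> (forall g, g \in A -> g \notin B) ->
  inHull (map emb A) p -> inHull (map emb B) q ->
  4 * N / #|S|%:R <= sqnorm (fun i => p i - q i).
Proof.
move=> N0 Hemb HN Hdis AS BS AB hp hq.
have [al [al0 alA sal pal]] := hull_coef _ _ _ _ _ _ Hemb AS hp.
have [be [be0 beB sbe qbe]] := hull_coef _ _ _ _ _ _ Hemb BS hq.
have m0 : (0 < #|S|)%N.
  rewrite lt0n; apply/negP => /eqP /cards0_eq S0.
  by move: sal; rewrite S0 big_set0 => /eqP; rewrite eq_sym oner_eq0.
have ab : forall g, al g * be g = 0.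
  move=> g; case gA: (g \in A).
    by rewrite (beB g (AB g gA)) mulr0.
  by rewrite (alA g (negbT gA)) mul0r.
have Hav := avg_sq S al be m0 sal sbe ab.
pose J' g := if g \in S then J g else set0.
have dis' : forall g g', g != g' -> [disjoint J' g & J' g'].
  move=> g g' ne; rewrite /J'; case: ifP => gS; last by rewrite -setI_eq0 set0I.
  case: ifP => g'S; last by rewrite -setI_eq0 setI0.
  exact: Hdis.
set f := fun i => (p i - q i) ^+ 2.
have step1 : \sum_(i in \bigcup_g J' g) f i <= sqnorm (fun i => p i - q i).
  rewrite /sqnorm [X in _ <= X](bigID (mem (\bigcup_g J' g))) /= -/f.
  rewrite lerDl; apply: sumr_ge0 => i _; exact: sqr_ge0.
rewrite (partition_disjoint_bigcup _ _ dis') in step1.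
apply: le_trans step1.
have -> : \sum_g \sum_(i in J' g) f i = \sum_(g in S) #|J g|%:R * ((al g - be g) * a g) ^+ 2.
  rewrite [RHS]big_mkcond; apply: eq_bigr => g _; rewrite /J'.
  case: ifP => gS; last by rewrite big_set0.
  rewrite (eq_bigr (fun _ => ((al g - be g) * a g) ^+ 2)).
    by rewrite sumr_const mulr_natl.
  by move=> i iJ; rewrite /f (pal g) // (qbe g) // mulrBl.
apply: le_trans (_ : \sum_(g in S) N * (al g - be g) ^+ 2 <= _).
  rewrite -mulr_sumr.
  have -> : 4 * N / #|S|%:R = N * (4 / #|S|%:R) by rewrite mulrCA mulrA.
  by apply: ler_wpM2l.
apply: ler_sum => g gS.
have -> : #|J g|%:R * ((al g - be g) * a g) ^+ 2 = (#|J g|%:R * a g ^+ 2) * (al g - be g) ^+ 2 by ring.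
apply: ler_wpM2r; [exact: sqr_ge0 | exact: HN].
Qed.

Close Scope ring_scope.

Lemma card_nth {T : Type} (x0 : T) (s : seq T) (P : pred T) :
  #|[set i : 'I_(size s) | P (nth x0 s i)]| = count P s.
Proof.
rewrite -sum1_card -sum1_count (big_nth x0) big_mkord.
by apply: eq_bigl => i; rewrite inE.
Qed.

Lemma count_flatten_map {T S : Type} (P : pred T) (f : S -> seq T) s :
  count P (flatten (map f s)) = \sum_(x <- s) count P (f x).
Proof. by elim: s => [|x s IH]; rewrite ?big_nil // big_cons /= count_cat IH. Qed.

Lemma allpairs_flat {S T U : Type} (F : S -> T -> U) s u :
  [seq F x y | x <- s, y <- u] = flatten [seq [seq F x y | y <- u] | x <- s].
Proof. by elim: s => //= x s ->. Qed.

Lemma count_iota_le c n : count (fun j => j <= c) (iota 1 n) = minn c n.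
Proof.
elim: n => [|n IH]; first by rewrite minn0.
rewrite -[n.+1]addn1 iotaD count_cat IH /= addn0; lia.
Qed.

Definition circ_ffun n w : {ffun 'I_n -> {ffun 'I_n -> bool}} :=
  [ffun u : 'I_n => [ffun v : 'I_n => (u != v) && ((u + v) %% n < w)]].

Lemma circ_is_graph n w : is_graph (circ_ffun n w).
Proof.
apply/andP; split.
  apply/forallP => u; apply/forallP => v; rewrite !ffunE.
  by rewrite [(u + v)%N]addnC [v == u]eq_sym.
by apply/forallP => u; rewrite !ffunE eqxx.
Qed.

Definition circ n w : graph n := exist _ (circ_ffun n w) (circ_is_graph n w).

Lemma adj_circ n w u v : adj (circ n w) u v = (u != v) && ((u + v) %% n < w).
Proof. by rewrite /adj /= !ffunE. Qed.

Definition deg {n} (G : graph n) (v : 'I_n) := #|[set u | adj G v u]|.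

Lemma card_lt_ord n w : w <= n -> #|[set k : 'I_n | k < w]| = w.
Proof.
move=> wn; have -> : [set k : 'I_n | k < w] = [set widen_ord wn k | k : 'I_w].
  apply/setP => k; rewrite inE; apply/idP/imsetP => [kw|[k' _ ->]] /=.
    by exists (Ordinal kw) => //; apply: val_inj.
  exact: ltn_ord.
by rewrite card_imset ?card_ord //; by move=> a b /(congr1 val) /= /val_inj.
Qed.

Lemma deg_circ n w (u : 'I_n) : w <= n ->
  deg (circ n w) u + ((u + u) %% n < w) = w.
Proof.
move=> wn; have n0 : 0 < n by apply: leq_ltn_trans (ltn_ord u).
pose f (v : 'I_n) : 'I_n := Ordinal (ltn_pmod (u + v) n0).
have finj : injective f.
  move=> v1 v2 /(congr1 val) /= /eqP; rewrite eqn_modDl => /eqP.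
  by rewrite !modn_small // => /val_inj.
have E := card_preimset [set k : 'I_n | k < w] finj.
rewrite card_lt_ord // in E.
transitivity #|f @^-1: [set k : 'I_n | k < w]|; last exact: E.
rewrite (cardD1 u) inE /= [RHS]addnC; congr (_ + _).
apply: eq_card => v; rewrite !inE adj_circ [v == u]eq_sym.
  by [].
by rewrite inE.
Qed.

Lemma count_enumT (T : finType) (P : pred T) : count P (enum T) = #|[set x | P x]|.
Proof.
rewrite -sum1_count -sum1_card big_enum_cond /=.
by apply: eq_bigl => x; rewrite inE.
Qed.

Definition dsize (c : nat) := size (CodeSeq.decode c).

Lemma dsize_wlcol Fs t n (G : graph n) v :
  dsize (wlcol Fs t.+1 G v) = (deg G v).+1.
Proof.
rewrite /dsize /= /relabel CodeSeq.codeK /= size_sort size_map size_filter.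
by rewrite count_enumT.
Qed.

Close Scope ring_scope.

Lemma sum_const_seq_nat {T : Type} (s : seq T) c : \sum_(x <- s) c = size s * c.
Proof. by elim: s => [|x s IH]; rewrite ?big_nil // big_cons IH /= mulSn. Qed.

Lemma wlcol_in_Sigma Fs n t (G : graph n) v : wlcol Fs t G v \in Sigma Fs n t.
Proof.
rewrite /Sigma mem_undup; apply/allpairsP; exists (G, v); split => //; exact: mem_enum.
Qed.

Lemma sum_wlcount Fs n t (G : graph n) :
  \sum_(c <- Sigma Fs n t) wlcount Fs t G c = n.
Proof.
have -> : \sum_(c <- Sigma Fs n t) wlcount Fs t G c =
          \sum_(c <- Sigma Fs n t) \sum_(v : 'I_n) (wlcol Fs t G v == c).
  apply: eq_bigr => c _; rewrite /wlcount -sum1_card big_mkcond /=.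
  by apply: eq_bigr => v _; rewrite inE; case: eqP.
rewrite exchange_big /= -[n in RHS]card_ord -sum1_card.
apply: eq_bigr => v _.
have := count_uniq_mem (wlcol Fs t G v) (undup_uniq _ : uniq (Sigma Fs n t)).
rewrite wlcol_in_Sigma => E.
transitivity (count_mem (wlcol Fs t G v) (Sigma Fs n t)); last by rewrite E.
rewrite -sum1_count [RHS]big_mkcond /=; apply: eq_bigr => c _.
by rewrite eq_sym; case: eqP.
Qed.

Lemma count_coords Fs n T (P : pred (nat * nat * nat)) :
  count P (coords Fs n T) =
  \sum_(t <- iota 0 T.+1) \sum_(c <- Sigma Fs n t) count (fun j => P (t, c, j)) (iota 1 n).
Proof.
rewrite /coords count_flatten_map; apply: eq_bigr => t _.
rewrite allpairs_flat count_flatten_map; apply: eq_bigr => c _.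
by rewrite count_map.
Qed.

Lemma wlcount_le Fs n t (G : graph n) c : wlcount Fs t G c <= n.
Proof. by rewrite /wlcount; apply: leq_trans (max_card _) _; rewrite card_ord. Qed.

Definition Pall Fs {n} (G : graph n) (x : nat * nat * nat) : bool :=
  let: (t, c, j) := x in j <= wlcount Fs t G c.
Definition PJ Fs {n} (G : graph n) (x : nat * nat * nat) : bool :=
  let: (t, c, j) := x in (0 < t) && (j <= wlcount Fs t G c).

Lemma count_Pall Fs n T (G : graph n) : count (Pall Fs G) (coords Fs n T) = T.+1 * n.
Proof.
rewrite count_coords.
rewrite (eq_bigr (fun _ => n)); first by rewrite sum_const_seq_nat size_iota.
move=> t _; rewrite -[RHS](sum_wlcount Fs n t G); apply: eq_bigr => c _.
rewrite /Pall count_iota_le; apply/minn_idPl; exact: wlcount_le.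
Qed.

Lemma count_PJ Fs n T (G : graph n) : count (PJ Fs G) (coords Fs n T) = T * n.
Proof.
rewrite count_coords.
rewrite /= big_cons big1_seq ?add0n; last first.
  by move=> c _; rewrite /PJ /=; elim: (iota 1 n).
rewrite big_seq (eq_bigr (fun _ => n)); first by rewrite -big_seq sum_const_seq_nat size_iota.
move=> t; rewrite mem_iota => /andP [t0 _].
rewrite -[RHS](sum_wlcount Fs n t G); apply: eq_bigr => c _.
rewrite /PJ t0 /= count_iota_le; apply/minn_idPl; exact: wlcount_le.
Qed.

Open Scope ring_scope.

Lemma le_sqrt_of_sq {R : realType} (y X : R) : 0 <= y -> y ^+ 2 <= X -> y <= Num.sqrt X.
Proof.
move=> y0 h; apply: le_trans (ler_wsqrtr h); rewrite sqrtr_sqr ger0_norm //.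
Qed.

Lemma shatter_generic {R : realType} n {I : finType} (emb : graph n -> I -> R)
  (S : {set graph n}) (J : graph n -> {set I}) (a : graph n -> R) (N r lam : R) :
  (0 < #|S|)%N -> 0 <= lam -> lam ^+ 2 * #|S|%:R <= N ->
  (forall g, g \in S -> vnorm (emb g) <= r) ->
  (forall g g' i, g \in S -> g' \in S -> i \in J g -> emb g' i = (g' == g)%:R * a g) ->
  (forall g, g \in S -> N <= #|J g|%:R * a g ^+ 2) ->
  (forall g g', g \in S -> g' \in S -> g != g' -> [disjoint J g & J g']) ->
  shattered (Hclass r lam emb) S.
Proof.
move=> S0 lam0 hN hr Hemb HJ Hdis b.
have N0 : 0 <= N by apply: le_trans hN; apply: mulr_ge0; [exact: sqr_ge0 | exact: ler0n].
exists (fun g => if g \in S then Some (b g) else None); split; last first.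
  by move=> g ->.
move=> gs hgs.
have gsS : {subset gs <= S}.
  by move=> g /hgs; case: (g \in S).
have Em : [seq (emb g, odflt false (if g \in S then Some (b g) else None)) | g <- gs]
        = [seq (emb g, b g) | g <- gs].
  by apply/eq_in_map => g /gsS ->.
rewrite Em; split.
  move=> x; rewrite -map_comp => /mapP [g /gsS gS ->]; exact: hr.
have EA : [seq y.1 | y <- [seq (emb g, b g) | g <- gs] & ~~ y.2]
          = map emb [seq g <- gs | ~~ b g].
  by rewrite filter_map -!map_comp.
have EB : [seq y.1 | y <- [seq (emb g, b g) | g <- gs] & y.2]
          = map emb [seq g <- gs | b g].
  by rewrite filter_map -!map_comp.
rewrite EA EB => p q hp hq.
have H := hull_lower emb S J a N [seq g <- gs | ~~ b g] [seq g <- gs | b g] p q N0 Hemb HJ Hdis.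
have {}H := fun h1 h2 h3 => H h1 h2 h3 hp hq.
have Hl : 4 * N / #|S|%:R <= sqnorm (fun i => p i - q i).
  apply: H.
  - by move=> g; rewrite mem_filter => /andP [_ /gsS].
  - by move=> g; rewrite mem_filter => /andP [_ /gsS].
  - by move=> g; rewrite !mem_filter => /andP [nb _]; rewrite negb_and nb.
rewrite /vdist /vnorm; apply: le_sqrt_of_sq; first lra.
apply: le_trans Hl.
have Sp : 0 < #|S|%:R :> R by rewrite ltr0n.
rewrite ler_pdivlMr //; lra.
Qed.

Close Scope ring_scope.

Definition gr n s : graph n := circ n (2 * s + 1).

Lemma deg_gr n s v : 2 * s + 1 <= n -> 2 * s <= @deg n (gr n s) v <= 2 * s + 1.
Proof. move=> h; have := deg_circ n (2 * s + 1) v h; rewrite /gr; case: (_ < _)%N => /=; lia. Qed.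

Lemma col_sep Fs n s s' t c : 2 * s + 1 <= n -> 2 * s' + 1 <= n -> 0 < t ->
  0 < wlcount Fs t (gr n s) c -> 0 < wlcount Fs t (gr n s') c -> s = s'.
Proof.
move=> hs hs' t0 /card_gt0P [v]; rewrite inE => /eqP hv /card_gt0P [v']; rewrite inE => /eqP hv'.
case: t t0 hv hv' => // t _ hv hv'.
have := dsize_wlcol Fs t n (gr n s) v; rewrite hv -hv' dsize_wlcol => [[E]].
have := deg_gr _ _ v hs; have := deg_gr _ _ v' hs'; rewrite E; lia.
Qed.

Definition fam n K : {set graph n} := [set gr n (val s) | s : 'I_K].

Lemma gr_inj n K (s s' : 'I_K) : K * 2 <= n -> gr n s = gr n s' -> s = s'.
Proof.
move=> hK E; have n0 : 0 < n by have := ltn_ord s; lia.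
pose v0 : 'I_n := Ordinal n0.
have h1 : 2 * s + 1 <= n by have := ltn_ord s; lia.
have h2 : 2 * s' + 1 <= n by have := ltn_ord s'; lia.
have := deg_gr _ _ v0 h1; have := deg_gr _ _ v0 h2; rewrite E => a b.
apply: ord_inj; lia.
Qed.

Lemma card_fam n K : K * 2 <= n -> #|fam n K| = K.
Proof.
move=> hK; rewrite card_imset ?card_ord //.
by move=> s s' /(gr_inj _ _ _ _ hK).
Qed.

Definition Sep Fs {n} (S : {set graph n}) := forall g g', g \in S -> g' \in S -> g != g' ->
  forall t c, 0 < t -> 0 < wlcount Fs t g c -> wlcount Fs t g' c = 0.

Lemma Sep_fam Fs n K : K * 2 <= n -> Sep Fs (fam n K).
Proof.
move=> hK g g' /imsetP [s _ ->] /imsetP [s' _ ->] ne t c t0 c1.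
have h1 : 2 * s + 1 <= n by have := ltn_ord s; lia.
have h2 : 2 * s' + 1 <= n by have := ltn_ord s'; lia.
apply/eqP; rewrite -leqn0 leqNgt; apply/negP => c2.
have E := col_sep _ _ _ _ _ _ h1 h2 t0 c1 c2.
by move: ne; rewrite (ord_inj E) eqxx.
Qed.

Open Scope ring_scope.

Lemma pick_K {R : realType} (y : R) : 2 <= y ->
  exists K : nat, [/\ (0 < K)%N, K%:R <= y & y / 2 <= K%:R].
Proof.
move=> y2; have y0 : 0 <= y by lra.
have /andP [h1 h2] := truncn_itv y0.
exists (Num.trunc y); split => //.
- by rewrite truncn_gt_nat; lra.
- move: h2; rewrite -natr1; lra.
Qed.

Lemma phi_val {R : realType} Fs n T (G : graph n) i :
  @phiWLOA R Fs n T G i = if Pall Fs G (nth (0,0,0)%N (coords Fs n T) i) then 1 else 0.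
Proof. by rewrite /phiWLOA /Pall; case: nth => [[t c] j]. Qed.

Lemma sum_ind {R : realType} {I : finType} (b : pred I) :
  \sum_i ((if b i then 1 else 0 : R) ^+ 2) = #|[set i | b i]|%:R.
Proof.
rewrite -sum1_card natr_sum [RHS]big_mkcond /=; apply: eq_bigr => i _.
by rewrite inE; case: (b i); rewrite ?expr1n ?expr0n.
Qed.

Lemma sqnorm_phi {R : realType} Fs n T (G : graph n) :
  sqnorm (@phiWLOA R Fs n T G) = (T.+1 * n)%:R.
Proof.
rewrite /sqnorm (eq_bigr (fun i : 'I_(dT Fs n T) => (if Pall Fs G (nth (0,0,0)%N (coords Fs n T) i) then 1 else 0 : R) ^+ 2)); last first.
  by move=> i _; rewrite phi_val.
rewrite sum_ind; congr (_%:R).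
by rewrite (card_nth (0,0,0)%N (coords Fs n T) (Pall Fs G)) count_Pall.
Qed.

Lemma coords_j Fs n T x : x \in coords Fs n T -> (0 < x.2)%N.
Proof.
rewrite /coords => /flattenP [l /mapP [t _ ->]] /allpairsP [[c j] [_ hj ->]] /=.
by rewrite mem_iota in hj; case/andP: hj.
Qed.

Definition JJ Fs {n} T (G : graph n) : {set 'I_(dT Fs n T)} :=
  [set i : 'I_(dT Fs n T) | PJ Fs G (nth (0,0,0)%N (coords Fs n T) i)].

Lemma card_JJ Fs n T (G : graph n) : #|JJ Fs T G| = (T * n)%N.
Proof. by rewrite (card_nth (0,0,0)%N (coords Fs n T) (PJ Fs G)) count_PJ. Qed.

Lemma nth_coords Fs n T (i : 'I_(dT Fs n T)) : nth (0,0,0)%N (coords Fs n T) i \in coords Fs n T.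
Proof. by apply: mem_nth; exact: ltn_ord. Qed.

Lemma Hemb_phi {R : realType} Fs n T (S : {set graph n}) : Sep Fs S ->
  forall g g' i, g \in S -> g' \in S -> i \in JJ Fs T g ->
  @phiWLOA R Fs n T g' i = (g' == g)%:R * 1.
Proof.
move=> hS g g' i gS g'S; rewrite inE phi_val mulr1.
have := coords_j _ _ _ _ (nth_coords _ _ _ i).
case: (nth _ _ _) => [[t c] j] /= j0 /andP [t0 hj].
case: eqP => [->|ne]; first by rewrite hj.
rewrite (hS g g') //; last by apply: leq_trans hj.
  by rewrite leqn0 (gtn_eqF j0).
by apply/eqP => E; apply: ne.
Qed.

Lemma Hdis_phi Fs n T (S : {set graph n}) : Sep Fs S ->
  forall g g', g \in S -> g' \in S -> g != g' -> [disjoint JJ Fs T g & JJ Fs T g'].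
Proof.
move=> hS g g' gS g'S ne; rewrite -setI_eq0; apply/eqP/setP => i; rewrite !inE.
apply/negP => /andP [].
have := coords_j _ _ _ _ (nth_coords _ _ _ i).
case: (nth _ _ _) => [[t c] j] /= j0 /andP [t0 hj] /andP [_ hj'].
have := hS g g' gS g'S ne t c t0 (leq_trans j0 hj).
move=> E; move: hj'; rewrite E leqn0 (gtn_eqF j0) //.
Qed.

Open Scope ring_scope.

Lemma VCdim_upper {R : realType} n (I : finType) (emb : graph n -> I -> R) r lam :
  0 < lam -> (VCdim (Hclass r lam emb))%:R <= 2 * (r ^+ 2 / lam ^+ 2) + 1.
Proof.
move=> lam0; rewrite /VCdim.
have b0 : 0 <= 2 * (r ^+ 2 / lam ^+ 2) + 1.
  have : 0 <= r ^+ 2 / lam ^+ 2 by rewrite divr_ge0 // sqr_ge0.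
  lra.
apply: (big_ind (fun x : nat => x%:R <= 2 * (r ^+ 2 / lam ^+ 2) + 1)) => //.
  by move=> x y hx hy; case: (leqP x y) => h; rewrite ?(maxn_idPr h) ?(maxn_idPl (ltnW h)).
by move=> S /asboolP hS; apply: shattered_upper.
Qed.

Lemma VCdim_lower n (H : (graph n -> option bool) -> Prop) S :
  shattered H S -> (#|S| <= VCdim H)%N.
Proof. by move=> hS; apply: (@leq_bigmax_cond _ (fun S => `[< shattered H S >]) (fun S => #|S|) S); apply/asboolP. Qed.

Lemma part1 {R : realType} (Fs : seq pattern) (T : nat) (lam : R) (n : nat) :
  (0 < T)%N -> 0 < lam ->
  let r := Num.sqrt ((T.+1 * n)%:R : R) in
  r ^+ 2 / lam ^+ 2 <= n%:R -> 8 <= r ^+ 2 / lam ^+ 2 ->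
  1 / 8 * (r ^+ 2 / lam ^+ 2) <= (VCdim (Hclass r lam (@phiWLOA R Fs n T)))%:R
  /\ (VCdim (Hclass r lam (@phiWLOA R Fs n T)))%:R <= 3 * (r ^+ 2 / lam ^+ 2).
Proof.
move=> T0 lam0 r hX hX8.
set X := r ^+ 2 / lam ^+ 2 in hX hX8 *.
split; last first.
  by apply: le_trans (VCdim_upper _ _ _ _ _ lam0) _; rewrite -/X; lra.
have r2 : r ^+ 2 = (T.+1 * n)%:R by rewrite sqr_sqrtr // ler0n.
set L := lam ^+ 2.
have L0 : 0 < L by rewrite exprn_gt0.
set a : R := T%:R; set m : R := n%:R.
have a1 : 1 <= a by rewrite ler1n.
have m0 : 0 <= m by rewrite ler0n.
have XL : X * L = (a + 1) * m.
  rewrite /X r2 natrM -/m mulfVK ?gt_eqF // /a -natr1; ring.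
set y := a * m / (2 * L).
have yL : y * (2 * L) = a * m by rewrite /y mulfVK // mulf_neq0 // gt_eqF.
have Xy : X <= 4 * y.
  have E : 4 * y * L = 2 * (a * m) by rewrite -yL; ring.
  have : X * L <= 4 * y * L by rewrite XL E; nra.
  by rewrite ler_pM2r.
have [K [K0 Ky yK]] := pick_K y ltac:(lra).
have K2n : (K * 2 <= n)%N.
  rewrite -(ler_nat R) natrM -/m.
  have : 2 * y <= X.
    have E : 2 * y * L = a * m by rewrite -yL; ring.
    have : 2 * y * L <= X * L by rewrite XL E; nra.
    by rewrite ler_pM2r.
  lra.
have Sh : shattered (Hclass r lam (@phiWLOA R Fs n T)) (fam n K).
  apply: (@shatter_generic R n _ (@phiWLOA R Fs n T) (fam n K) (JJ Fs T) (fun _ => 1) (a * m) r lam).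
  - by rewrite card_fam.
  - exact: ltW.
  - rewrite card_fam // -/L.
    have : K%:R * (2 * L) <= a * m by rewrite -yL ler_pM2r // mulr_gt0.
    have : 0 <= K%:R * L by rewrite mulr_ge0 // ltW.
    nra.
  - by move=> g _; rewrite /vnorm sqnorm_phi.
  - exact: (Hemb_phi Fs n T (fam n K) (Sep_fam Fs n K K2n)).
  - by move=> g _; rewrite card_JJ expr1n mulr1 natrM.
  - exact: (Hdis_phi Fs n T (fam n K) (Sep_fam Fs n K K2n)).
have := VCdim_lower _ _ _ Sh; rewrite card_fam // -(ler_nat R) => hV.
apply: le_trans hV; lra.
Qed.

Lemma part2 {R : realType} (Fs : seq pattern) (T : nat) (lam : R) (n : nat) :
  (0 < T)%N -> 0 < lam ->
  let r := Num.sqrt (T%:R / (T.+1)%:R : R) in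
  r ^+ 2 / lam ^+ 2 <= n%:R -> 8 <= 1 / lam ^+ 2 ->
  1 / 8 * (1 / lam ^+ 2) <= (VCdim (Hclass 1 lam (@nphiWLOA R Fs n T)))%:R
  /\ (VCdim (Hclass 1 lam (@nphiWLOA R Fs n T)))%:R <= 3 * (1 / lam ^+ 2).
Proof.
move=> T0 lam0 r hX hY8.
set Y := 1 / lam ^+ 2 in hY8 *.
split; last first.
  apply: le_trans (VCdim_upper _ _ _ _ _ lam0) _.
  rewrite expr1n -/Y; lra.
set a : R := T%:R; set m : R := n%:R.
have a1 : 1 <= a by rewrite ler1n.
have m0 : 0 <= m by rewrite ler0n.
set N := a / (a + 1).
have r2 : r ^+ 2 = N by rewrite sqr_sqrtr ?divr_ge0 ?ler0n // /N /a -natr1.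
have N2 : 1 / 2 <= N by rewrite /N ler_pdivlMr ?ltr_pwDl //; lra.
have N1 : N <= 1 by rewrite /N ler_pdivrMr ?ltr_pwDl //; lra.
set L := lam ^+ 2.
have L0 : 0 < L by rewrite exprn_gt0.
have YL : Y * L = 1 by rewrite /Y /L mul1r mulVf // gt_eqF.
set y := N * Y / 2.
have Y0 : 0 <= Y by lra.
have [K [K0 Ky yK]] := pick_K y ltac:(rewrite /y; nra).
have K2n : (K * 2 <= n)%N.
  rewrite -(ler_nat R) natrM -/m.
  have : N * Y <= m by move: hX; rewrite r2 /Y /L mul1r.
  rewrite /y in Ky; lra.
have n0 : (0 < n)%N by lia.
have m1 : 0 < m by rewrite ltr0n.
have vphi : forall g : graph n, vnorm (@phiWLOA R Fs n T g) = Num.sqrt ((T.+1 * n)%:R).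
  by move=> g; rewrite /vnorm sqnorm_phi.
have vpos : 0 < Num.sqrt ((T.+1 * n)%:R : R) by rewrite sqrtr_gt0 ltr0n muln_gt0.
have Sh : shattered (Hclass 1 lam (@nphiWLOA R Fs n T)) (fam n K).
  apply: (@shatter_generic R n _ (@nphiWLOA R Fs n T) (fam n K) (JJ Fs T)
           (fun _ => (Num.sqrt ((T.+1 * n)%:R : R))^-1) N 1 lam).
  - by rewrite card_fam.
  - exact: ltW.
  - rewrite card_fam // -/L.
    have : K%:R <= N * Y / 2 by [].
    move=> hK; have : K%:R * L <= N * Y / 2 * L by rewrite ler_pM2r.
    have E1 : N * Y / 2 * L = N / 2 * (Y * L) by ring.
    rewrite E1 YL mulr1.
    rewrite mulrC; have : 0 <= N by lra.
    lra.
  - move=> g _; rewrite /vnorm.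
    have -> : sqnorm (@nphiWLOA R Fs n T g) = 1.
      rewrite /sqnorm /nphiWLOA.
      rewrite (eq_bigr (fun i => (vnorm (@phiWLOA R Fs n T g))^-1 ^+ 2 * (@phiWLOA R Fs n T g i) ^+ 2)); last first.
        by move=> i _; rewrite mulrC exprMn.
      rewrite -mulr_sumr -/(sqnorm _) vphi sqnorm_phi.
      rewrite exprVn sqr_sqrtr ?ler0n // mulVf // pnatr_eq0 -lt0n muln_gt0 //.
    by rewrite sqrtr1.
  - move=> g g' i gS g'S iJ; rewrite /nphiWLOA (Hemb_phi Fs n T (fam n K) (Sep_fam Fs n K K2n) g g' i) //.
    by rewrite !vphi mulr1.
  - move=> g _; rewrite card_JJ exprVn sqr_sqrtr ?ler0n // /N /a /m.
    rewrite (natrM _ T n) (natrM _ T.+1 n) -natr1.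
    rewrite invfM mulrACA mulfV ?mulr1 //.
    by rewrite -/m gt_eqF.
  - exact: (Hdis_phi Fs n T (fam n K) (Sep_fam Fs n K K2n)).
have := VCdim_lower _ _ _ Sh; rewrite card_fam // -(ler_nat R) => hV.
apply: le_trans hV.
rewrite /y in yK; nra.
Qed.

Open Scope ring_scope.

Theorem corollary7 (R : realType) (Fs : seq pattern) :
  (exists c1 c2 x0 : R, [/\ 0 < c1, 0 < c2 &
     forall (T : nat) (lam : R) (n : nat), (0 < T)%N -> 0 < lam ->
       let r := Num.sqrt ((T.+1 * n)%:R : R) in
       r ^+ 2 / lam ^+ 2 <= n%:R -> x0 <= r ^+ 2 / lam ^+ 2 ->
       c1 * (r ^+ 2 / lam ^+ 2) <= (VCdim (Hclass r lam (@phiWLOA R Fs n T)))%:R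
       /\ (VCdim (Hclass r lam (@phiWLOA R Fs n T)))%:R <= c2 * (r ^+ 2 / lam ^+ 2)])
  /\
  (exists c1 c2 x0 : R, [/\ 0 < c1, 0 < c2 &
     forall (T : nat) (lam : R) (n : nat), (0 < T)%N -> 0 < lam ->
       let r := Num.sqrt (T%:R / (T.+1)%:R : R) in
       r ^+ 2 / lam ^+ 2 <= n%:R -> x0 <= 1 / lam ^+ 2 ->
       c1 * (1 / lam ^+ 2) <= (VCdim (Hclass 1 lam (@nphiWLOA R Fs n T)))%:R
       /\ (VCdim (Hclass 1 lam (@nphiWLOA R Fs n T)))%:R <= c2 * (1 / lam ^+ 2)]).
Proof.
split; exists (1 / 8), 3, 8; split => //.
- by rewrite mul1r invr_gt0 ltr0n.
- exact: part1.
- by rewrite mul1r invr_gt0 ltr0n.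
- exact: part2.
Qed.
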